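(* Let $\mathcal D$ be a non-trivial $2$-$(k^{2},k,\lambda)$ design with $\lambda\mid k$, admitting a flag-transitive automorphism group $G$. Then: (1) $G$ acts primitively on the point set; (2) for every point $x$, $G_x$ is a large subgroup of $G$; (3) for every point $y\ne x$ and every block $B$ containing $x$, $|y^{G_x}|=(k+1)\,|B\cap y^{G_x}|$; in particular $k+1$ divides the length of every $G_x$-orbit on points other than $\{x\}$.
   Context: A $2$-$(v,k,\lambda)$ design consists of $v$ points and a family of $k$-subsets (blocks) such that each pair of distinct points lies in exactly $\lambda$ blocks; non-trivial means $2<k<v$. $G\le\mathrm{Aut}(\mathcal D)$ is flag-transitive if transitive on pairs $(x,B)$ with $x\in B$. $G_x$ is the point stabilizer, $y^{G_x}$ the $G_x$-orbit of $y$. A subgroup $H$ of a finite group $K$ is large if $|K|<|H|^3$. *)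

(* Defs.v *)
From mathcomp Require Import all_boot all_fingroup all_solvable.
Set Implicit Arguments. Unset Strict Implicit. Unset Printing Implicit Defensive.

Definition is_2design (T : finType) (blocks : {set {set T}}) (v k lambda : nat) :=
  [/\ #|T| = v,
      forall B, B \in blocks -> #|B| = k &
      forall x y : T, x != y ->
        #|[set B in blocks | (x \in B) && (y \in B)]| = lambda].

Definition nontrivial_design (T : finType) (k : nat) := 2 < k < #|T|.

Definition design_aut (T : finType) (blocks : {set {set T}}) (G : {group {perm T}}) :=
  forall g, g \in G -> forall B, B \in blocks -> (g @: B) \in blocks.

Definition flag (T : finType) (blocks : {set {set T}}) (x : T) (B : {set T}) :=
  (B \in blocks) && (x \in B).

Definition flag_transitive (T : finType) (blocks : {set {set T}}) (G : {group {perm T}}) :=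
  forall x B y C, flag blocks x B -> flag blocks y C ->
    exists2 g, g \in G & (g x = y /\ g @: B = C).

Definition large (gT : finGroupType) (H K : {set gT}) := #|K| < #|H| ^ 3.

(* Main.v *)
Require Import Defs.
From mathcomp Require Import all_boot all_fingroup all_solvable.
From mathcomp Require Import zify.

Lemma arith_prim k a d : 0 < k -> d * a = k ^ 2 -> k.+1 %| (a - 1) ->
  k.+1 %| k ^ 2 - a -> 1 < a -> 1 < d -> False.
Proof.
move=> k0 e h1 h2 a1 d1.
have e2 : k ^ 2 - a = (d - 1) * (a - 1) + (d - 1).
  rewrite -e -[X in _ - X]mul1n -mulnBl.
  have -> : a = (a - 1) + 1 by rewrite subnK // ltnW.
  by rewrite addnK mulnDr muln1.
have h3 : k.+1 %| (d - 1) * (a - 1) by apply: dvdn_mull.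
rewrite e2 (dvdn_addr _ h3) in h2.
have la := dvdn_leq (ltac:(lia) : 0 < a - 1) h1.
have ld := dvdn_leq (ltac:(lia) : 0 < d - 1) h2.
have : k.+2 * k.+2 <= d * a by apply: leq_mul; lia.
rewrite e -mulnn => H; have : k * k < k.+2 * k.+2 by apply: ltn_mul. by rewrite ltnNge H.
Qed.

Lemma sq_pred k : (k ^ 2).-1 = k.+1 * k.-1.
Proof. case: k => [|j] //. rewrite -mulnn /=. nia. Qed.
Lemma large_ar k n l : 0 < l -> k.+1 * l <= n -> k ^ 2 * n < n ^ 3.
Proof. move=> l0 h. have h2 : k < n by apply: leq_trans h; rewrite leq_pmulr.
have : k ^ 2 < n ^ 2 by rewrite ltn_exp2r.
have -> : n ^ 3 = n ^ 2 * n by rewrite -expnSr.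
move=> H. rewrite ltn_pmul2r //; lia. Qed.

Lemma stab_trans (T : finType) (blocks : {set {set T}}) (G : {group {perm T}}) x B C :
  flag_transitive blocks G -> B \in blocks -> x \in B -> C \in blocks -> x \in C ->
  exists2 g, g \in ('C_G[x | 'P])%g & g @: B = C.
Proof.
move=> ft hB xB hC xC.
have f1 : flag blocks x B by rewrite /flag hB xB.
have f2 : flag blocks x C by rewrite /flag hC xC.
have [g Gg [gx gB]] := ft x B x C f1 f2.
exists g => //; rewrite inE Gg; apply/astab1P; by rewrite /= apermE gx.
Qed.

Lemma double_count (T : finType) (blocks : {set {set T}}) v k lambda x (S : {set T}) :
  is_2design blocks v k lambda -> x \notin S ->
  \sum_(C in [set C in blocks | x \in C]) #|C :&: S| = #|S| * lambda.
Proof.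
case=> _ _ hl xS.
rewrite (eq_bigl (fun C => (C \in blocks) && (x \in C))); last by move=> C; rewrite inE.
transitivity (\sum_(C | (C \in blocks) && (x \in C)) \sum_(y | (y \in S) && (y \in C)) 1).
  apply: eq_bigr => C _; rewrite sum1dep_card; apply: eq_card => y; by rewrite !inE andbC.
rewrite (exchange_big_dep (fun y => y \in S)) /=; last by move=> C y _ /andP[].
rewrite -sum_nat_const; apply: eq_bigr => y yS.
rewrite sum1dep_card -(hl x y); last by apply: contraNneq xS => ->.
apply: eq_card => C; rewrite !inE yS /=; by rewrite andbA.
Qed.

Lemma orbit_sum_div (T : finType) (A : {group {perm T}}) (S : {set T}) m :
  [acts A, on S | 'P] -> (forall y, y \in S -> m %| #|orbit 'P A y|) -> m %| #|S|.
Proof.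
move=> hA hm; rewrite -(acts_sum_card_orbit hA).
by apply: dvdn_sum => Y /imsetP[y Sy ->]; apply: hm.
Qed.

Theorem lemma3p2 (T : finType) (blocks : {set {set T}}) (k lambda : nat)
    (G : {group {perm T}}) :
  is_2design blocks (k ^ 2) k lambda ->
  nontrivial_design T k ->
  lambda %| k ->
  design_aut blocks G ->
  flag_transitive blocks G ->
  [/\ [primitive G, on [set: T] | 'P],
      (forall x : T, large ('C_G[x | 'P])%g G),
      (forall x y : T, y != x -> forall B, B \in blocks -> x \in B ->
         #|orbit 'P ('C_G[x | 'P])%g y| = k.+1 * #|B :&: orbit 'P ('C_G[x | 'P])%g y|) &
      (forall x y : T, y != x -> k.+1 %| #|orbit 'P ('C_G[x | 'P])%g y|)].
Proof.
move=> D; have [hv hk hl] := D; move=> /andP[k2 kv] lk aut ft.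
have l0 : 0 < lambda.
  by case: lambda lk hl D => // ; rewrite dvd0n => /eqP k0; lia.
have rE : forall x, #|[set C in blocks | x \in C]| = k.+1 * lambda.
  move=> x; have hx : x \notin [set~ x] by rewrite !inE eqxx.
  have := @double_count _ _ _ _ _ x [set~ x] D hx.
  rewrite (eq_bigr (fun _ => k.-1)); last first.
    move=> C; rewrite inE => /andP[hC xC].
    move: (cardsD1 x C); rewrite xC (hk C hC) setDE => h; lia.
  rewrite sum_nat_const cardsC1 hv => e.
  apply/eqP; rewrite -(@eqn_pmul2r k.-1) ?e; last lia.
  by rewrite sq_pred mulnAC.
have notin : forall x y, y != x -> x \notin orbit 'P ('C_G[x | 'P])%g y.
  move=> x y yx; rewrite orbit_sym; apply/negP => /orbitP[g /setIP[_ gx] gy].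
  by move/astab1P: gx; rewrite gy => /eqP; rewrite (negbTE yx).
have P3 : forall x y : T, y != x -> forall B, B \in blocks -> x \in B ->
         #|orbit 'P ('C_G[x | 'P])%g y| = k.+1 * #|B :&: orbit 'P ('C_G[x | 'P])%g y|.
  move=> x y yx B hB xB; set Y := orbit 'P _ y.
  have le : forall B C, B \in [set C in blocks | x \in C] -> C \in [set C in blocks | x \in C] ->
      #|B :&: Y| <= #|C :&: Y|.
    move=> B1 C1; rewrite !inE => /andP[hB1 xB1] /andP[hC1 xC1].
    have [g Gg gB] := @stab_trans _ _ _ _ _ _ ft hB1 xB1 hC1 xC1.
    rewrite -gB -(card_imset _ (@perm_inj _ g)); apply: subset_leq_card.
    apply/subsetP => _ /imsetP[z /setIP[zB zY] ->]; rewrite inE imset_f //=.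
    by rewrite -apermE orbit_actr.
  have := @double_count _ _ _ _ _ x Y D (notin x y yx).
  have hBx : B \in [set C in blocks | x \in C] by rewrite inE hB xB.
  rewrite (eq_bigr (fun _ => #|B :&: Y|)); last first.
    by move=> C hC; apply/eqP; rewrite eqn_leq !le.
  rewrite sum_nat_const rE => e.
  apply/eqP; rewrite -(@eqn_pmul2r lambda) // -e; by rewrite mulnAC.
have Bne : forall x, exists B, B \in [set C in blocks | x \in C].
  move=> x; apply/set0Pn; rewrite -card_gt0 rE; lia.
have P4 : forall x y : T, y != x -> k.+1 %| #|orbit 'P ('C_G[x | 'P])%g y|.
  move=> x y yx; have [B] := Bne x; rewrite inE => /andP[hB xB].
  by rewrite (P3 x y yx B hB xB) dvdn_mulr.
have orbT : forall x y, y \in orbit 'P G x.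
  move=> x y; have [<-|yx] := eqVneq x y; first exact: orbit_refl.
  have : 0 < #|[set B in blocks | (x \in B) && (y \in B)]| by rewrite hl // eq_sym.
  case/card_gt0P => C; rewrite !inE => /and3P[hC xC yC].
  have f1 : flag blocks x C by rewrite /flag hC xC.
  have f2 : flag blocks y C by rewrite /flag hC yC.
  have [g Gg [gx _]] := ft x C y C f1 f2.
  by apply/orbitP; exists g; rewrite // apermE.
have orbTE : forall x, orbit 'P G x = [set: T].
  by move=> x; apply/setP => y; rewrite inE orbT.
have [x0 _] : exists x0 : T, true.
  have : 0 < #|T| by rewrite hv; lia.
  by case/card_gt0P => x0 _; exists x0.
have trG : [transitive G, on [set: T] | 'P].
  by apply/imsetP; exists x0; rewrite ?inE // orbTE.
have iGx : forall x, #|G : ('C_G[x | 'P])|%g = k ^ 2.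
  by move=> x; rewrite -card_orbit orbTE cardsT.
split => //.
- rewrite (trans_prim_astab (x := x0)) ?inE //.
  apply/maximal_eqP; split; first exact: subsetIl.
  move=> H sGxH sHG.
  set Gx := ('C_G[x0 | 'P])%G in sGxH *.
  set X := orbit 'P H x0.
  have CH : ('C_H[x0 | 'P])%g = Gx.
    apply/eqP; rewrite eqEsubset setSI //= subsetI sGxH subsetIr //.
  have cX : #|X| = #|H : Gx|%g by rewrite card_orbit CH.
  have li := Lagrange_index sHG sGxH; rewrite iGx in li.
  have actX : [acts Gx, on X | 'P].
    apply: subset_trans sGxH (acts_orbit _ _ _); exact: subsetT.
  have act1 : [acts Gx, on [set x0] | 'P] by rewrite /= astabs_set1 subsetIr.
  have d1 : k.+1 %| #|X :\ x0|.
    apply: orbit_sum_div; first exact: (actsD actX act1).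
    move=> y; rewrite !inE => /andP[yx _]; exact: P4.
  have d2 : k.+1 %| #|~: X|.
    apply: (@orbit_sum_div _ Gx).
      by apply/actsP => g Gg z; rewrite !inE (actsP actX).
    move=> y; rewrite !inE => yX; apply: P4; apply: contraNneq yX => ->.
    exact: orbit_refl.
  move: (cardsD1 x0 X) (cardsC X); rewrite orbit_refl hv => e1 e2.
  have [a1|a1] := eqVneq #|H : Gx|%g 1.
    by left; rewrite (index1g sGxH a1).
  have [dd1|dd1] := eqVneq #|G : H|%g 1.
    by right; apply: index1g sHG dd1.
  exfalso; apply: (arith_prim k #|H : Gx|%g #|G : H|%g) => //.
  + lia.
  + by rewrite -cX; have -> : #|X| - 1 = #|X :\ x0| by lia.
  + by rewrite -cX -e2 addKn.
  + have : 0 < #|H : Gx|%g by []. lia.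
  + have : 0 < #|G : H|%g by []. lia.
- move=> x; rewrite /large.
  have := card_orbit_stab 'P G x; rewrite orbTE cardsT hv => <-.
  have [B hBx] := Bne x; move: (hBx); rewrite inE => /andP[hB xB].
  have : #|[set C in blocks | x \in C]| <= #|('C_G[x | 'P])%g|.
    apply: leq_trans (leq_imset_card (fun g : {perm T} => g @: B) _).
    apply: subset_leq_card; apply/subsetP => C; rewrite inE => /andP[hC xC].
    have [g Gg gB] := @stab_trans _ _ _ _ _ _ ft hB xB hC xC.
    by apply/imsetP; exists g.
  rewrite rE => h; exact: large_ar _ _ _ l0 h.
Qed.
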